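(* Let $E$, $D$, $S$ be binary random variables taking values in $\{0,1\}$ such that every joint cell probability $P(E=e,D=d,S=s)$ is positive, and write $p(d,e)=P(S=1\mid D=d,E=e)$. Suppose there is no interaction of $E$ and $D$ on $S$ on the odds ratio scale, i.e. $\mathrm{OR}_{ES\mid D=1}=\mathrm{OR}_{ES\mid D=0}$. (a) If $p(d,e)$ is non-decreasing in both $d$ and $e$, or non-increasing in both $d$ and $e$, then $\mathrm{OR}_{ED\mid S=1}\le \mathrm{OR}_{ED}$. (b) If $p(d,e)$ is non-decreasing in one of $d,e$ and non-increasing in the other, then $\mathrm{OR}_{ED\mid S=1}\ge \mathrm{OR}_{ED}$.
   Context: For binary random variables $A,B$ and a random variable $C$, $\mathrm{OR}_{AB\mid C=c}=\frac{P(A=1,B=1\mid C=c)P(A=0,B=0\mid C=c)}{P(A=1,B=0\mid C=c)P(A=0,B=1\mid C=c)}$, and $\mathrm{OR}_{AB}$ is the unconditional version. ''Non-decreasing in $d$'' means $p(1,e)\ge p(0,e)$ for each $e\in\{0,1\}$; ''non-decreasing in $e$'' means $p(d,1)\ge p(d,0)$ for each $d\in\{0,1\}$; non-increasing analogously. *)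

(* Defs.v *)
From mathcomp Require Import all_boot all_order all_algebra.
Set Implicit Arguments. Unset Strict Implicit. Unset Printing Implicit Defensive.
Import Order.TTheory GRing.Theory Num.Theory.
Local Open Scope ring_scope.

(* A joint distribution of three binary random variables (E, D, S), values
   {0,1} encoded as bool (false = 0, true = 1):  q e d s = P(E=e, D=d, S=s). *)
Definition is_joint3 (R : realFieldType) (q : bool -> bool -> bool -> R) : Prop :=
  (forall e d s, 0 < q e d s) /\
  \sum_(e : bool) \sum_(d : bool) \sum_(s : bool) q e d s = 1.

Definition OR (R : realFieldType) (f : bool -> bool -> R) : R :=
  (f true true * f false false) / (f true false * f false true).

Definition PD (R : realFieldType) (q : bool -> bool -> bool -> R) (d : bool) : R :=
  \sum_(e : bool) \sum_(s : bool) q e d s.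
Definition PS (R : realFieldType) (q : bool -> bool -> bool -> R) (s : bool) : R :=
  \sum_(e : bool) \sum_(d : bool) q e d s.

Definition OR_ES_given_D (R : realFieldType) (q : bool -> bool -> bool -> R) (d : bool) : R :=
  OR (fun e s => q e d s / PD q d).
Definition OR_ED_given_S (R : realFieldType) (q : bool -> bool -> bool -> R) (s : bool) : R :=
  OR (fun e d => q e d s / PS q s).
Definition OR_ED (R : realFieldType) (q : bool -> bool -> bool -> R) : R :=
  OR (fun e d => \sum_(s : bool) q e d s).

Definition pS (R : realFieldType) (q : bool -> bool -> bool -> R) (d e : bool) : R :=
  q e d true / (\sum_(s : bool) q e d s).

Definition nondecr_d (R : realFieldType) (p : bool -> bool -> R) : Prop :=
  forall e, p false e <= p true e.
Definition nondecr_e (R : realFieldType) (p : bool -> bool -> R) : Prop :=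
  forall d, p d false <= p d true.
Definition nonincr_d (R : realFieldType) (p : bool -> bool -> R) : Prop :=
  forall e, p true e <= p false e.
Definition nonincr_e (R : realFieldType) (p : bool -> bool -> R) : Prop :=
  forall d, p d true <= p d false.

(* Main.v *)
Require Import Defs.
From mathcomp Require Import all_boot all_order all_algebra.
From mathcomp Require Import ring lra.
Import Order.TTheory GRing.Theory Num.Theory.
Local Open Scope ring_scope.

Section H.
Variable R : realFieldType.

Lemma keyA (o11 o10 o01 o00 y11 y10 y01 y00 : R) :
  0 < o11 -> 0 < o10 -> 0 < o01 -> 0 < o00 ->
  0 < y11 -> 0 < y10 -> 0 < y01 -> 0 < y00 ->
  o11 * o00 = o10 * o01 -> o10 + o01 <= o11 + o00 ->
  (o11*y11)*(o00*y00)/((o10*y10)*(o01*y01)) <=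
  ((o11*y11+y11)*(o00*y00+y00))/((o10*y10+y10)*(o01*y01+y01)).
Proof.
move=> h1 h2 h3 h4 g1 g2 g3 g4 K S.
have Hb : 0 < o10*y10*(o01*y01) by rewrite !mulr_gt0.
have Hd : 0 < (o10*y10+y10)*(o01*y01+y01) by rewrite !mulr_gt0 // addr_gt0 // mulr_gt0.
rewrite ler_pdivlMr // mulrAC ler_pdivrMr //.
have -> : o11 * y11 * (o00 * y00) * ((o10 * y10 + y10) * (o01 * y01 + y01)) =
  ((o11 * o00) * ((1 + o10) * (1 + o01))) * (y11*y00*y10*y01) by ring.
have -> : (o11 * y11 + y11) * (o00 * y00 + y00) * (o10 * y10 * (o01 * y01)) =
  ((o10 * o01) * ((1 + o11) * (1 + o00))) * (y11*y00*y10*y01) by ring.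
rewrite K; apply: ler_wpM2r; first by rewrite ltW // !mulr_gt0.
apply: ler_wpM2l; first by rewrite ltW // !mulr_gt0.
have -> : (1 + o10) * (1 + o01) = 1 + (o10 + o01) + o10 * o01 by ring.
have -> : (1 + o11) * (1 + o00) = 1 + (o11 + o00) + o11 * o00 by ring.
by rewrite K; lra.
Qed.

Lemma keyB (o11 o10 o01 o00 y11 y10 y01 y00 : R) :
  0 < o11 -> 0 < o10 -> 0 < o01 -> 0 < o00 ->
  0 < y11 -> 0 < y10 -> 0 < y01 -> 0 < y00 ->
  o11 * o00 = o10 * o01 -> o11 + o00 <= o10 + o01 ->
  ((o11*y11+y11)*(o00*y00+y00))/((o10*y10+y10)*(o01*y01+y01)) <=
  (o11*y11)*(o00*y00)/((o10*y10)*(o01*y01)).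
Proof.
move=> h1 h2 h3 h4 g1 g2 g3 g4 K S.
have Hb : 0 < o10*y10*(o01*y01) by rewrite !mulr_gt0.
have Hd : 0 < (o10*y10+y10)*(o01*y01+y01) by rewrite !mulr_gt0 // addr_gt0 // mulr_gt0.
rewrite ler_pdivlMr // mulrAC ler_pdivrMr //.
have -> : o11 * y11 * (o00 * y00) * ((o10 * y10 + y10) * (o01 * y01 + y01)) =
  ((o11 * o00) * ((1 + o10) * (1 + o01))) * (y11*y00*y10*y01) by ring.
have -> : (o11 * y11 + y11) * (o00 * y00 + y00) * (o10 * y10 * (o01 * y01)) =
  ((o10 * o01) * ((1 + o11) * (1 + o00))) * (y11*y00*y10*y01) by ring.
rewrite K; apply: ler_wpM2r; first by rewrite ltW // !mulr_gt0.
apply: ler_wpM2l; first by rewrite ltW // !mulr_gt0.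
have -> : (1 + o10) * (1 + o01) = 1 + (o10 + o01) + o10 * o01 by ring.
have -> : (1 + o11) * (1 + o00) = 1 + (o11 + o00) + o11 * o00 by ring.
by rewrite K; lra.
Qed.

Lemma mono (x y x' y' : R) : 0 < x -> 0 < y -> 0 < x' -> 0 < y' ->
  x / (x + y) <= x' / (x' + y') -> x / y <= x' / y'.
Proof.
move=> hx hy hx' hy'.
rewrite ler_pdivlMr ?addr_gt0 // mulrAC ler_pdivrMr ?addr_gt0 // => h.
rewrite ler_pdivlMr // mulrAC ler_pdivrMr //. nra.
Qed.

Lemma sumA (o1 o2 o3 o4 : R) : 0 < o1 -> 0 < o2 -> 0 < o3 -> 0 < o4 ->
  o1 * o4 = o2 * o3 -> o2 <= o1 -> o3 <= o1 -> o2 + o3 <= o1 + o4.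
Proof. move=> *; nra. Qed.

Lemma canc (P a b c d : R) : P != 0 -> c != 0 -> d != 0 ->
  (a / P * (b / P)) / ((c / P) * (d / P)) = (a * b) / (c * d).
Proof. move=> hP hc hd. by field; rewrite hP hc hd. Qed.
End H.
Arguments sumA {R} [o1 o2 o3 o4].

Definition odds {R : realFieldType} (q : bool -> bool -> bool -> R) e d :=
  q e d true / q e d false.

Theorem mainTheorem2 (R : realFieldType) (q : bool -> bool -> bool -> R) :
  is_joint3 q ->
  OR_ES_given_D q true = OR_ES_given_D q false ->
  (((nondecr_d (pS q) /\ nondecr_e (pS q)) \/ (nonincr_d (pS q) /\ nonincr_e (pS q))) ->
     OR_ED_given_S q true <= OR_ED q) /\
  (((nondecr_d (pS q) /\ nonincr_e (pS q)) \/ (nonincr_d (pS q) /\ nondecr_e (pS q))) ->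
     OR_ED q <= OR_ED_given_S q true).
Proof.
case=> Hp _ HC.
have Hn e d s : q e d s != 0 by rewrite gt_eqF.
have qE e d : q e d true = odds q e d * q e d false.
  by rewrite /odds; field; rewrite Hn.
have op e d : 0 < odds q e d by rewrite divr_gt0.
have on e d : odds q e d != 0 by rewrite gt_eqF.
have ORD d : OR_ES_given_D q d = odds q true d / odds q false d.
  rewrite /OR_ES_given_D /OR canc.
  - by rewrite /odds; field; rewrite !Hn.
  - by rewrite /PD !big_bool /= gt_eqF // !addr_gt0.
  - exact: Hn.
  - exact: Hn.
have K : odds q true true * odds q false false = odds q true false * odds q false true.
  have E1 : odds q true true = odds q true false / odds q false false * odds q false true.
    by rewrite -[_ / odds q false false]ORD -HC ORD; field; rewrite on.
  by rewrite E1; field; rewrite on.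
have MO d e d' e' : pS q d e <= pS q d' e' -> odds q e d <= odds q e' d'.
  by rewrite /pS !big_bool /=; apply: mono.
have Hg : OR_ED_given_S q true = (odds q true true * q true true false) * (odds q false false * q false false false) /
   ((odds q true false * q true false false) * (odds q false true * q false true false)).
  rewrite /OR_ED_given_S /OR canc; first by rewrite !qE.
  - by rewrite /PS !big_bool /= gt_eqF // !addr_gt0.
  - exact: Hn.
  - exact: Hn.
have Hu : OR_ED q = (odds q true true * q true true false + q true true false) * (odds q false false * q false false false + q false false false) /
   ((odds q true false * q true false false + q true false false) * (odds q false true * q false true false + q false true false)).
  by rewrite /OR_ED /OR !big_bool /= !qE.
rewrite Hg Hu; split.
- move=> H; apply: keyA => //.
  case: H => [[Hd He]|[Hd He]].
  + apply: sumA => //; [exact: MO _ _ _ _ (Hd true) | exact: MO _ _ _ _ (He true)].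
  + have h : odds q true false + odds q false true <= odds q false false + odds q true true.
      apply: sumA => //; [by rewrite mulrC K | exact: MO _ _ _ _ (He false) | exact: MO _ _ _ _ (Hd false)].
    lra.
- move=> H; apply: keyB => //.
  case: H => [[Hd He]|[Hd He]].
  + have h : odds q true true + odds q false false <= odds q false true + odds q true false.
      apply: sumA => //; [by rewrite mulrC -K mulrC | exact: MO _ _ _ _ (He true) | exact: MO _ _ _ _ (Hd false)].
    lra.
  + apply: sumA => //; [exact: MO _ _ _ _ (Hd true) | exact: MO _ _ _ _ (He false)].
Qed.
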